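(* For any $\Delta, k \in \mathbb{N}$ and $\xi > 0$ there exist $\beta > 0$ and $n_0 \in \mathbb{N}$ such that the following holds. Let $H$ be a bipartite graph on $n \geq n_0$ vertices with bandwidth at most $\beta n$ and $\Delta(H) \leq \Delta$. Let $n_1, n_2, \dots, n_{2k}$ be an integer partition of $n$ such that $n_i > n/(3k)$ for all $1 \leq i \leq 2k$ and $|n_{2i-1} - n_{2i}| \ll \xi n$ for all $1 \leq i \leq k$. Let $C$ be the cycle $1 2 \dots (2k) 1$ on vertex set $[2k]$ and let $c = \{2i_1, 2i_2\}$ be a chord of $C$ for some distinct $1 \leq i_1, i_2 \leq k$. Then there exist a set $S \subseteq V(H)$ and a graph homomorphism $f : H \to C \cup \{c\}$ such that: ($\beta_1$) $|S| \leq \xi n$; ($\beta_2$) $|f^{-1}(i)| \leq n_i + \xi n$ for all $1 \leq i \leq 2k$; ($\beta_3$) every edge of $H$ not in $H[S]$ is mapped to an edge $\{2i-1, 2i\}$ for some $1 \leq i \leq k$.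
   Context: The hypothesis $|n_{2i-1} - n_{2i}| \ll \xi n$ means $|n_{2i-1}-n_{2i}| \leq \lambda n$ for a constant $\lambda>0$ chosen sufficiently small relative to $\xi$. A graph $H$ on $n$ vertices has bandwidth at most $b$ if there is a labelling of its vertices by $1,\dots,n$ such that $|i-j| \leq b$ for every edge $ij$. $C \cup \{c\}$ denotes the graph obtained from the cycle $C$ by adding the edge $c$; a graph homomorphism maps edges to edges. *)

(* Defs.v *)
From HB Require Import structures.
From mathcomp Require Import all_boot all_order all_algebra.
From mathcomp Require Import fingroup perm reals.
Set Implicit Arguments. Unset Strict Implicit. Unset Printing Implicit Defensive.
Import Order.TTheory GRing.Theory Num.Theory.
Local Open Scope ring_scope.

Definition simple_graph (n : nat) (e : rel 'I_n) : Prop :=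
  irreflexive e /\ symmetric e.

Definition bipartite (n : nat) (e : rel 'I_n) : Prop :=
  exists c : 'I_n -> bool, forall u v, e u v -> c u != c v.

Definition max_deg_le (n : nat) (e : rel 'I_n) (D : nat) : Prop :=
  forall v, (#|[set u | e v u]| <= D)%N.

Definition bandwidth_le (R : realType) (n : nat) (e : rel 'I_n) (b : R) : Prop :=
  exists s : {perm 'I_n}, forall u v, e u v ->
    `| ((s u : nat)%:R : R) - (s v : nat)%:R | <= b.

Definition cycle_edge (k a b : nat) : bool :=
  [|| [&& (1 <= a)%N, b == a.+1 & (b <= 2 * k)%N],
      [&& (1 <= b)%N, a == b.+1 & (a <= 2 * k)%N],
      (a == 1%N) && (b == 2 * k)%N
    | (a == 2 * k)%N && (b == 1%N)].

Definition chord_edge (i1 i2 a b : nat) : bool :=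
  ((a == 2 * i1) && (b == 2 * i2))%N || ((a == 2 * i2) && (b == 2 * i1))%N.

Definition hom_to_cycle_chord (n : nat) (e : rel 'I_n) (k i1 i2 : nat)
    (f : 'I_n -> nat) : Prop :=
  (forall v, (1 <= f v <= 2 * k)%N) /\
  (forall u v, e u v -> cycle_edge k (f u) (f v) || chord_edge i1 i2 (f u) (f v)).

(* Main.v *)
Require Import Defs.
From HB Require Import structures.
From mathcomp Require Import all_boot all_order all_algebra.
From mathcomp Require Import fingroup perm reals.
From mathcomp Require Import zify ring lra.
Set Implicit Arguments. Unset Strict Implicit. Unset Printing Implicit Defensive.


Definition G k i1 i2 a b := cycle_edge k a b || chord_edge i1 i2 a b.
Definition srel k i1 i2 (x y : nat * nat) :=
  [&& G k i1 i2 x.1 x.2, G k i1 i2 y.1 y.2, G k i1 i2 x.1 y.2 & G k i1 i2 x.2 y.1].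

Lemma G_sym k i1 i2 a b : G k i1 i2 a b = G k i1 i2 b a.
Proof.
apply/idP/idP; rewrite /G /cycle_edge /chord_edge; lia.
Qed.
Lemma Gs k i1 i2 a b : (1 <= a)%N -> b = a.+1 -> (b <= 2 * k)%N -> G k i1 i2 a b && G k i1 i2 b a.
Proof. rewrite /G /cycle_edge /chord_edge; lia. Qed.

Fixpoint slA m : seq (nat * nat) :=
  if m is m'.+1 then (2 * m'+3, 2 * m'+2)%N :: (2 * m'+1, 2 * m'+2)%N :: slA m' else [::].
Fixpoint slB m : seq (nat * nat) :=
  if m is m'.+1 then (2 * m'+2, 2 * m'+3)%N :: (2 * m'+2, 2 * m'+1)%N :: slB m' else [::].

Lemma slA_path k i1 i2 m : (m < k)%N ->
  path (srel k i1 i2) (2 * m+1, 2 * m+2)%N (slA m) /\ last (2 * m+1, 2 * m+2)%N (slA m) = (1, 2)%N.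
Proof.
elim: m => [|m IH] hm //=.
have [IH1 IH2] := IH (ltnW hm).
split; last by [].
rewrite IH1 !andbT /srel /= /G /cycle_edge /chord_edge; lia.
Qed.

Lemma slB_path k i1 i2 m : (m < k)%N ->
  path (srel k i1 i2) (2 * m+2, 2 * m+1)%N (slB m) /\ last (2 * m+2, 2 * m+1)%N (slB m) = (2, 1)%N.
Proof.
elim: m => [|m IH] hm //=.
have [IH1 IH2] := IH (ltnW hm).
split; last by [].
rewrite IH1 !andbT /srel /= /G /cycle_edge /chord_edge; lia.
Qed.

Lemma size_slA m : size (slA m) = (2 * m)%N.
Proof. elim: m => //= m ->; lia. Qed.
Lemma size_slB m : size (slB m) = (2 * m)%N.
Proof. elim: m => //= m ->; lia. Qed.

Lemma srel_sym k i1 i2 x y : srel k i1 i2 x y = srel k i1 i2 y x.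
Proof. rewrite /srel (G_sym _ _ _ x.1 y.2) (G_sym _ _ _ x.2 y.1); lia. Qed.

Lemma last_rev_belast T (x : T) p : last (last x p) (rev (belast x p)) = x.
Proof.
case: p => //= y p; rewrite rev_cons last_rcons //.
Qed.

Lemma rev_path_sym k i1 i2 x p :
  path (srel k i1 i2) x p -> path (srel k i1 i2) (last x p) (rev (belast x p)).
Proof.
move=> h; rewrite rev_path; apply: sub_path h => a b; by rewrite srel_sym.
Qed.

Definition flip l h : seq (nat * nat) :=
  rev (belast (2 * h + 2, 2 * h + 1)%N (slB h)) ++
  (2 * h + 2, 2 * l + 2)%N :: (2 * l + 1, 2 * l + 2)%N :: slA l.

Definition st p (o : bool) : nat * nat :=
  if o then (2 * (p - 1) + 1, 2 * (p - 1) + 2)%N else (2 * (p - 1) + 2, 2 * (p - 1) + 1)%N.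

Definition route l h p (o : bool) : seq (nat * nat) :=
  if o then slA (p - 1) else slB (p - 1) ++ flip l h.

Lemma flip_path k i1 i2 l h : (l < h)%N -> (h < k)%N ->
  ((l.+1 == i1) && (h.+1 == i2) || (l.+1 == i2) && (h.+1 == i1)) ->
  path (srel k i1 i2) (2, 1)%N (flip l h) /\ last (2, 1)%N (flip l h) = (1, 2)%N.
Proof.
move=> hlh hk hc.
have [B1 B2] := slB_path i1 i2 hk.
have [A1 A2] := slA_path i1 i2 (ltn_trans hlh hk).
rewrite /flip cat_path last_cat /=.
have R := rev_path_sym B1; rewrite B2 in R.
have L := last_rev_belast (2 * h + 2, 2 * h + 1)%N (slB h); rewrite B2 in L.
rewrite R L A1 A2 !andbT; split => //.
rewrite /srel /= /G /cycle_edge /chord_edge; lia.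
Qed.

Lemma route_path k i1 i2 l h p o : (l < h)%N -> (h < k)%N ->
  ((l.+1 == i1) && (h.+1 == i2) || (l.+1 == i2) && (h.+1 == i1)) ->
  (1 <= p <= k)%N ->
  path (srel k i1 i2) (st p o) (route l h p o) /\ last (st p o) (route l h p o) = (1, 2)%N.
Proof.
move=> hlh hk hc hp.
have hp1 : (p - 1 < k)%N by lia.
case: o; rewrite /st /route.
  exact: slA_path.
have [B1 B2] := slB_path i1 i2 hp1.
have [F1 F2] := flip_path hlh hk hc.
by rewrite cat_path last_cat B1 B2 F1 F2.
Qed.

Lemma size_route k l h p o : (l < h)%N -> (h < k)%N -> (1 <= p <= k)%N ->
  (size (route l h p o) <= 6 * k)%N.
Proof.
move=> *; rewrite /route; case: o; rewrite ?size_cat /flip ?size_cat ?size_rev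
  ?size_belast /= ?size_slA ?size_slB; lia.
Qed.

Lemma path_nth_step T (e : rel T) x l y : path e x l -> last x l = y -> e y y ->
  forall t, e (nth y (x :: l) t) (nth y (x :: l) t.+1).
Proof.
move=> hp hl hy t.
have [ht|ht] := ltnP t (size l).
  by move/(pathP y): hp => /(_ t ht).
rewrite [nth y _ t.+1]nth_default /=; last by lia.
case: (eqVneq t (size l)) => [->|hne].
  by rewrite -(last_nth y) hl.
by rewrite nth_default //=; lia.
Qed.

Definition tau (P : nat -> nat) (O : nat -> bool) b := st (P b) (O b).
Definition Qb l h P O b := tau P O b.-1 ::
  (route l h (P b.-1) (O b.-1) ++ rev (belast (tau P O b) (route l h (P b) (O b)))).
Definition sig D l h P O z :=
  let b := (z %/ D.+1)%N in nth (tau P O b) (Qb l h P O b) (z %% D.+1).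
Definition zone D M w p := ((p %/ M) * D.+1 + minn ((p %% M) %/ w) D)%N.

Lemma Qb_path k i1 i2 l h P O b : (l < h)%N -> (h < k)%N ->
  ((l.+1 == i1) && (h.+1 == i2) || (l.+1 == i2) && (h.+1 == i1)) ->
  (1 <= P b.-1 <= k)%N -> (1 <= P b <= k)%N ->
  path (srel k i1 i2) (tau P O b.-1) (behead (Qb l h P O b)) /\
  last (tau P O b.-1) (behead (Qb l h P O b)) = tau P O b /\
  (size (Qb l h P O b) <= 12 * k + 1)%N.
Proof.
move=> hlh hk hc h1 h2.
have [A1 A2] := route_path (O b.-1) hlh hk hc h1.
have [B1 B2] := route_path (O b) hlh hk hc h2.
rewrite /Qb /= cat_path last_cat /tau A1 A2 /=.
have R := rev_path_sym B1; rewrite B2 in R.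
have L := last_rev_belast (st (P b) (O b)) (route l h (P b) (O b)); rewrite B2 in L.
rewrite R L; split => //; split => //.
rewrite size_cat size_rev size_belast.
have := size_route (O b.-1) hlh hk h1; have := size_route (O b) hlh hk h2; lia.
Qed.

Lemma st_refl k i1 i2 p o : (1 <= p <= k)%N -> srel k i1 i2 (st p o) (st p o).
Proof. move=> hp; case: o; rewrite /srel /st /= /G /cycle_edge /chord_edge; lia. Qed.

Lemma sig_step k i1 i2 l h P O z : (l < h)%N -> (h < k)%N ->
  ((l.+1 == i1) && (h.+1 == i2) || (l.+1 == i2) && (h.+1 == i1)) ->
  (1 <= P (z %/ (12 * k + 3).+1).-1 <= k)%N -> (1 <= P (z %/ (12 * k + 3).+1) <= k)%N ->
  srel k i1 i2 (sig (12 * k + 3) l h P O z) (sig (12 * k + 3) l h P O z.+1).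
Proof.
move=> hlh hk hc h1 h2.
have [Q1 [Q2 Q3]] := Qb_path O hlh hk hc h1 h2.
set D := (12 * k + 3)%N.
rewrite /sig.
set b := (z %/ D.+1)%N.
have hz : z = (b * D.+1 + z %% D.+1)%N by rewrite /b -divn_eq.
have ht : (z %% D.+1 < D.+1)%N by rewrite ltn_mod.
case: (ltnP (z %% D.+1) D) => ht2.
- have e1 : (z.+1 %/ D.+1 = b)%N.
    by rewrite {1}hz -addnS divnMDl // divn_small ?addn0 //; lia.
  have e2 : (z.+1 %% D.+1 = (z %% D.+1).+1)%N.
    by rewrite {1}hz -addnS modnMDl modn_small //; lia.
  rewrite e1 e2.
  have -> : Qb l h P O b = tau P O b.-1 :: behead (Qb l h P O b) by [].
  apply: path_nth_step Q1 Q2 _ _.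
  exact: st_refl.
- have et : (z %% D.+1 = D)%N by lia.
  have ez : z.+1 = (b.+1 * D.+1)%N by rewrite {1}hz et mulSn; lia.
  have e1 : (z.+1 %/ D.+1 = b.+1)%N by rewrite ez mulnK.
  have e2 : (z.+1 %% D.+1 = 0)%N by rewrite ez modnMl.
  rewrite e1 e2 et nth_default; last by apply: leq_trans Q3 _; rewrite /D; lia.
  rewrite /=.
  exact: st_refl.
Qed.

Lemma zone_step D M w p q : (0 < w)%N -> (D.+1 * w <= M)%N -> (p <= q)%N -> (q < p + w)%N ->
  zone D M w q = zone D M w p \/ zone D M w q = (zone D M w p).+1.
Proof.
move=> hw hM hpq hq.
have hM0 : (0 < M)%N by apply: leq_trans hM; rewrite muln_gt0 hw.
rewrite /zone.
have hp := divn_eq p M; have hqe := divn_eq q M.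
have hrp := ltn_pmod p hM0; have hrq := ltn_pmod q hM0.
set bp := (p %/ M)%N in hp *; set bq := (q %/ M)%N in hqe *.
set rp := (p %% M)%N in hp hrp *; set rq := (q %% M)%N in hqe hrq *.
have h1 : (bp <= bq)%N by apply: leq_div2r.
have h2 : (bq < bp.+2)%N by rewrite /bq ltn_divLR // !mulSn; lia.
have hwM : (w <= M)%N by apply: leq_trans hM; rewrite leq_pmull.
have [e|e] : bq = bp \/ bq = bp.+1 by lia.
- have er : (rp <= rq < rp + w)%N by rewrite e in hqe; lia.
  have h3 : (rp %/ w <= rq %/ w)%N by apply: leq_div2r; lia.
  have h4 : (rq %/ w < (rp %/ w).+2)%N.
    rewrite ltn_divLR // !mulSn.
    have := ltn_ceil rp hw; rewrite mulSn; lia.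
  rewrite e; lia.
- have e1 : (rq %/ w = 0)%N by rewrite divn_small //; rewrite e mulSn in hqe; lia.
  have e2 : (D <= rp %/ w)%N.
    rewrite leq_divRL //; rewrite e mulSn in hqe; move: hM; rewrite mulSn; lia.
  rewrite e e1 mulSn; right; lia.
Qed.

Lemma card_pos (T : finType) (g : T -> nat) (A : {set T}) lo hi :
  {in A &, injective g} -> (forall v, v \in A -> lo <= g v < hi)%N -> (#|A| <= hi - lo)%N.
Proof.
move=> ginj hr.
rewrite cardE -(size_map g) -(size_iota lo (hi - lo)).
apply: uniq_leq_size.
  rewrite map_inj_in_uniq ?enum_uniq // => x y; rewrite !mem_enum; exact: ginj.
move=> x /mapP [v]; rewrite mem_enum => /hr hv ->; rewrite mem_iota; lia.
Qed.

Lemma ivt (h : nat -> nat) m T N :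
  (forall F, h F.+1 <= h F + m /\ h F <= h F.+1 + m)%N ->
  (h 0 <= T <= h N \/ h N <= T <= h 0)%N ->
  exists F, (F <= N)%N /\ (T <= h F + m)%N /\ (h F <= T + m)%N.
Proof.
move=> hs.
elim: N => [|N IH] hT.
  by exists 0%N; lia.
have [s1 s2] := hs N.
have [hT'|hT'] : (h 0 <= T <= h N \/ h N <= T <= h 0)%N \/
   (h N < T <= h N.+1 \/ h N.+1 <= T < h N)%N by lia.
  by have [F [? ?]] := IH hT'; exists F; split => //; lia.
by exists N.+1; lia.
Qed.

Lemma G_range k i1 i2 a b : (1 <= i1 <= k)%N -> (1 <= i2 <= k)%N ->
  G k i1 i2 a b -> (1 <= a <= 2 * k)%N /\ (1 <= b <= 2 * k)%N.
Proof. rewrite /G /cycle_edge /chord_edge; lia. Qed.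

Lemma blk_zone D M w p : (0 < w)%N -> (zone D M w p %/ D.+1 = p %/ M)%N /\
   (zone D M w p %% D.+1 = minn ((p %% M) %/ w) D)%N.
Proof.
move=> hw; have hD : (minn ((p %% M) %/ w) D < D.+1)%N by rewrite ltnS geq_minr.
by rewrite /zone divnMDl // modnMDl (divn_small hD) (modn_small hD) addn0.
Qed.

Lemma sig_head D l h P O b : sig D l h P O (b.+1 * D.+1) = tau P O b.
Proof. by rewrite /sig mulnK // modnMl. Qed.

Lemma sig_at k l h P O b t : (l < h)%N -> (h < k)%N ->
  (1 <= P b.-1 <= k)%N -> (1 <= P b <= k)%N -> (12 * k + 2 <= t <= 12 * k + 3)%N ->
  sig (12 * k + 3) l h P O (b * (12 * k + 3).+1 + t) = tau P O b.
Proof.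
move=> hlh hk h1 h2 ht.
rewrite /sig divnMDl // modnMDl divn_small ?modn_small ?addn0; try lia.
rewrite nth_default //.
rewrite /Qb /= size_cat size_rev size_belast.
have := size_route (O b.-1) hlh hk h1; have := size_route (O b) hlh hk h2; lia.
Qed.

Lemma pp_spec (C : nat -> nat) k x : C 0 = 0%N -> (x < C k)%N ->
  let j := find (fun j => x < C j)%N (iota 0 k.+1) in
  (1 <= j <= k)%N /\ (C j.-1 <= x < C j)%N.
Proof.
move=> C0 hx j.
have hh : has (fun j => x < C j)%N (iota 0 k.+1).
  by apply/hasP; exists k => //; rewrite mem_iota; lia.
have hj : (j < k.+1)%N by move: hh; rewrite has_find size_iota.
have hn := nth_find 0%N hh; rewrite -/j nth_iota // add0n in hn.
have j0 : (0 < j)%N.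
  case: (posnP j) => // j0; by rewrite j0 C0 in hn.
have hlt : (j.-1 < j)%N by lia.
have := before_find 0%N hlt; rewrite nth_iota; last by lia.
rewrite add0n => /negbT; rewrite -leqNgt => hb'.
split; first by lia.
by rewrite hb' hn.
Qed.

Lemma core (n : nat) (e : rel 'I_n) (c : 'I_n -> bool) (s : {perm 'I_n})
  (w Kb k i1 i2 : nat) (n_ : nat -> nat) :
  (0 < w)%N -> (0 < Kb)%N ->
  (forall u v, e u v -> c u != c v) ->
  (forall u v, e u v -> (s u < s v + w)%N /\ (s v < s u + w)%N) ->
  (\sum_(1 <= i < (2 * k).+1) n_ i)%N = n ->
  (1 <= i1 <= k)%N -> (1 <= i2 <= k)%N -> i1 != i2 ->
  exists (S : {set 'I_n}) (f : 'I_n -> nat),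
    hom_to_cycle_chord e k i1 i2 f /\
    (#|S| <= (n %/ ((12 * k + 3).+1 * w * Kb)).+1 * ((12 * k + 3) * w))%N /\
    (forall i, (1 <= i <= k)%N ->
       (2 * #|[set v | f v == (2 * i).-1]| <=
          2 * ((n %/ ((12 * k + 3).+1 * w * Kb)).+1 * ((12 * k + 3) * w))
          + n_ (2 * i).-1 + n_ (2 * i) + 3 * ((12 * k + 3).+1 * w * Kb))%N /\
       (2 * #|[set v | f v == 2 * i]| <=
          2 * ((n %/ ((12 * k + 3).+1 * w * Kb)).+1 * ((12 * k + 3) * w))
          + n_ (2 * i).-1 + n_ (2 * i) + 3 * ((12 * k + 3).+1 * w * Kb))%N) /\
    (forall u v, e u v -> ~~ ((u \in S) && (v \in S)) ->
         exists i, (1 <= i <= k)%N /\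
           ((f u = (2 * i).-1 /\ f v = 2 * i)%N \/
            (f u = 2 * i /\ f v = (2 * i).-1)%N)).
Proof.
move=> hw hKb hcol hbw hsum hi1 hi2 hi12.
set D := (12 * k + 3)%N.
set M := (D.+1 * w * Kb)%N.
have hDM : (D.+1 * w <= M)%N by rewrite /M leq_pmulr.
have hM0 : (0 < M)%N by rewrite /M !muln_gt0 hw hKb.
pose l := (minn i1 i2).-1; pose h := (maxn i1 i2).-1.
have hlh : (l < h)%N by rewrite /l /h; lia.
have hk : (h < k)%N by rewrite /h; lia.
have hc : (l.+1 == i1) && (h.+1 == i2) || (l.+1 == i2) && (h.+1 == i1).
  rewrite /l /h; lia.
pose C j := (\sum_(1 <= i < (2 * j).+1) n_ i)%N.
have C0 : C 0 = 0%N by rewrite /C big_geq.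
have Ck : C k = n by [].
have CS : forall j, C j.+1 = (C j + n_ (2 * j).+1 + n_ (2 * j).+2)%N.
  move=> j; rewrite /C.
  have -> : ((2 * j.+1).+1 = (2 * j).+3)%N by lia.
  by rewrite big_nat_recr // big_nat_recr //=; lia.
pose pp x := find (fun j => x < C j)%N (iota 0 k.+1).
pose P b := pp (b * M)%N.
have Prange : forall b, (b * M < n)%N -> (1 <= P b <= k)%N /\ (C (P b).-1 <= b * M < C (P b))%N.
  move=> b hb; apply: pp_spec => //; by rewrite Ck.
have Prange2 : forall p, (p < n)%N ->
    (1 <= P (p %/ M).-1 <= k)%N /\ (1 <= P (p %/ M) <= k)%N.
  move=> p hp.
  have h1 : (p %/ M * M <= p)%N by rewrite leq_trunc_div.
  have h2 : ((p %/ M).-1 * M <= p %/ M * M)%N by rewrite leq_mul2r leq_pred orbT.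
  split; [apply: (Prange _ _).1 | apply: (Prange _ _).1]; lia.
pose blk (v : 'I_n) := (s v %/ M)%N.
pose Nb := (n %/ M).+1.
have blk_lt : forall v, (blk v < Nb)%N.
  move=> v; rewrite /blk /Nb ltnS leq_div2r //; exact: ltnW.
pose RS i := [set v | P (blk v) == i].
pose BS F := [set v | c v == (blk v < F)%N].
pose X i F := #|RS i :&: BS F|.
have blk_card : forall F, (#|[set v | blk v == F]| <= M)%N.
  move=> F.
  have := @card_pos _ (fun v : 'I_n => val (s v)) [set v | blk v == F] (F * M) (F * M + M).
  rewrite addKn; apply.
    by move=> x y _ _ /val_inj /perm_inj.
  move=> v; rewrite inE /blk => /eqP hv.
  have := divn_eq (s v) M; have := ltn_pmod (s v) hM0; rewrite hv /=; lia.
have Xstep : forall i F, (X i F.+1 <= X i F + M /\ X i F <= X i F.+1 + M)%N.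
  move=> i F.
  have sub : forall G G', (G = F \/ G = F.+1) -> (G' = F \/ G' = F.+1) ->
    RS i :&: BS G \subset (RS i :&: BS G') :|: [set v | blk v == F].
    move=> G G' hG hG'; apply/subsetP => v; rewrite !inE.
    case: hG => ->; case: hG' => ->; case: (c v); rewrite ?eqxx ?eqbF_neg ?eqb_id; (lia || match goal with |- ?g => idtac g; fail end).
  split.
    apply: leq_trans (subset_leq_card (sub _ _ (or_intror erefl) (or_introl erefl))) _.
    by rewrite cardsU /X; have := blk_card F; lia.
  apply: leq_trans (subset_leq_card (sub _ _ (or_introl erefl) (or_intror erefl))) _.
  by rewrite cardsU /X; have := blk_card F; lia.
have Xend : forall i, (X i 0 + X i Nb = #|RS i|)%N.
  move=> i; rewrite -(cardsID (BS 0) (RS i)) /X; congr (_ + _)%N.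
  apply: eq_card => v; rewrite !inE blk_lt ltn0.
  by case: (c v); rewrite /= ?andbT ?andbF.
pose good i F := (#|RS i| <= 2 * X i F + 2 * M)%N && (2 * X i F <= #|RS i| + 2 * M)%N.
pose Fi i := nth 0%N (iota 0 Nb.+1) (find (good i) (iota 0 Nb.+1)).
have Fi_good : forall i, good i (Fi i).
  move=> i; apply: nth_find; apply/hasP.
  have hs : forall F, (2 * X i F.+1 <= 2 * X i F + 2 * M /\ 2 * X i F <= 2 * X i F.+1 + 2 * M)%N.
    by move=> F; have := Xstep i F; lia.
  have hT : (2 * X i 0 <= #|RS i| <= 2 * X i Nb \/ 2 * X i Nb <= #|RS i| <= 2 * X i 0)%N.
    by have := Xend i; lia.
  have [F [hF1 [hF2 hF3]]] := @ivt (fun F => 2 * X i F)%N (2 * M) #|RS i| Nb hs hT.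
  by exists F; [rewrite mem_iota; lia | rewrite /good; apply/andP; split; lia].
pose O b := (b < Fi (P b))%N.
pose sg z := sig D l h P O z.
pose zn p := zone D M w p.
pose f (v : 'I_n) := let x := sg (zn (s v)) in if c v then x.1 else x.2.
pose S := [set v : 'I_n | (s v %% M < D * w)%N].
have step : forall p, (p < n)%N -> srel k i1 i2 (sg (zn p)) (sg (zn p).+1).
  move=> p hp; have [b1 b2] := blk_zone D M p hw; have [h1 h2] := Prange2 p hp.
  by apply: sig_step => //; rewrite /zn b1.
have zstep : forall p q, (p <= q)%N -> (q < p + w)%N -> zn q = zn p \/ zn q = (zn p).+1.
  by move=> p q; apply: zone_step.
have body : forall (v : 'I_n) q, ~~ (s v %% M < D * w)%N -> (q < n)%N ->
    (s v <= q < s v + w \/ q <= s v < q + w)%N -> sg (zn q) = tau P O (s v %/ M).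
  move=> v q hv hq hvq.
  set p := val (s v) in hv hvq *.
  have hp : (p < n)%N by rewrite /p ltn_ord.
  have [b1 b2] := blk_zone D M p hw.
  have hmin : minn ((p %% M) %/ w) D = D.
    by apply/minn_idPr; rewrite leq_divRL // leqNgt.
  have hz : zn p = (p %/ M * D.+1 + D)%N.
    by rewrite /zn (divn_eq (zone D M w p) D.+1) b1 b2 hmin.
  have [h1 h2] := Prange2 p hp.
  have sa := fun t => @sig_at k l h P O (p %/ M) t hlh hk h1 h2.
  case: hvq => /andP[hq1 hq2].
  - case: (zstep p q hq1 hq2) => ->.
      by rewrite hz; apply: sa; rewrite /D; clear; lia.
    rewrite hz; have -> : (p %/ M * D.+1 + D).+1 = ((p %/ M).+1 * D.+1)%N by rewrite mulSn addnC addSn.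
    by apply: sig_head.
  - case: (zstep q p hq1 hq2) => e1.
      by rewrite -e1 hz; apply: sa; rewrite /D; clear; lia.
    have hD1 : (1 <= D)%N by rewrite /D; clear; lia.
    have -> : zn q = (p %/ M * D.+1 + D.-1)%N.
      by rewrite hz in e1; move: e1 hD1; clear; set x := (p %/ M * D.+1)%N; lia.
    by apply: sa; rewrite /D; clear; lia.
have valid : forall p, (p < n)%N -> G k i1 i2 (sg (zn p)).1 (sg (zn p)).2.
  by move=> p hp; have /and4P[] := step p hp.
have hom : hom_to_cycle_chord e k i1 i2 f.
  split.
    move=> v; have := valid _ (ltn_ord (s v)) => /(G_range hi1 hi2) [r1 r2].
    by rewrite /f; case: (c v).
  move=> u v huv; rewrite -/(G k i1 i2 (f u) (f v)).
  have hc' := hcol u v huv; have [b1 b2] := hbw u v huv.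
  have key : forall x y : 'I_n, c x != c y -> (s x <= s y)%N -> (s y < s x + w)%N ->
      G k i1 i2 (f x) (f y).
    move=> x y hc2 h1 h2; rewrite /f.
    have vu := valid _ (ltn_ord (s x)).
    case: (zstep _ _ h1 h2) => ->.
      by move: hc2 vu; case: (c x); case: (c y) => //= _; rewrite G_sym.
    have /and4P[_ _ g1 g2] := step _ (ltn_ord (s x)).
    by move: hc2; case: (c x); case: (c y).
  case: (leqP (s u) (s v)) => hle; first exact: key.
  rewrite G_sym; apply: key; [by rewrite eq_sym | exact: ltnW | exact: b1].
have near : forall a b, (a < b + w)%N -> (b < a + w)%N ->
    (a <= b < a + w \/ b <= a < b + w)%N.
  by move=> a b; clear; lia.
have near0 : forall a, (a <= a < a + w \/ a <= a < a + w)%N.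
  by move=> a; left; clear -hw; lia.
have b3 : forall u v, e u v -> ~~ ((u \in S) && (v \in S)) ->
    exists i, (1 <= i <= k)%N /\
           ((f u = (2 * i).-1 /\ f v = 2 * i)%N \/
            (f u = 2 * i /\ f v = (2 * i).-1)%N).
  move=> u v huv hS.
  have [b1 b2] := hbw u v huv; have hc' := hcol u v huv.
  have [x [hx hxuv]] : exists x : 'I_n, ~~ (s x %% M < D * w)%N /\ (x = u \/ x = v).
    move: hS; rewrite !inE negb_and => /orP[h1|h1]; [exists u | exists v]; by split; [|auto].
  have [ex1 ex2] : sg (zn (s u)) = tau P O (s x %/ M) /\ sg (zn (s v)) = tau P O (s x %/ M).
    case: hxuv => -> in hx *; split; apply: body => //; try exact: ltn_ord;
      by [apply: near0 | apply: near | apply: near b2 b1].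
  have [_ hP] := Prange2 _ (ltn_ord (s x)).
  exists (P (s x %/ M)); split => //.
  rewrite /f ex1 ex2 /tau /st.
  move: hc'; case: (O _); case: (c u); case: (c v) => //= _; clear -hP; lia.
have hDw : (0 < D * w)%N by rewrite muln_gt0 hw /D addn3.
have Scard : (#|S| <= Nb * (D * w))%N.
  have := @card_pos _ (fun v : 'I_n => blk v * (D * w) + s v %% M)%N S 0 (Nb * (D * w)).
  rewrite subn0; apply.
    move=> x y; rewrite !inE => hx hy /= hxy.
    have e1 : blk x = blk y.
      by have := congr1 (fun z => z %/ (D * w))%N hxy; rewrite /= !divnMDl //
        !divn_small // !addn0.
    have e2 : (s x %% M = s y %% M)%N by rewrite e1 in hxy; apply: (addnI hxy).
    apply: (@perm_inj _ s); apply: val_inj => /=.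
    by rewrite (divn_eq (s x) M) (divn_eq (s y) M) -/(blk x) -/(blk y) e1 e2.
  move=> v; rewrite inE /= => hv.
  have := blk_lt v; move: hv; rewrite /Nb; set bb := blk v; set r := (s v %% M)%N.
  move=> hv hb; apply: (@leq_trans ((bb.+1) * (D * w))); first by rewrite mulSn; lia.
  by rewrite leq_mul2r hb orbT.
have Rcard : forall i, (1 <= i <= k)%N -> (#|RS i| <= n_ (2 * i).-1 + n_ (2 * i) + M)%N.
  move=> i hi.
  have := @card_pos _ (fun v : 'I_n => val (s v)) (RS i) (C i.-1) (C i + M).
  have ->: (C i + M - C i.-1 = n_ (2 * i).-1 + n_ (2 * i) + M)%N.
    case: i hi => [|j] hj; first by lia.
    have e1 : ((2 * j.+1).-1 = (2 * j).+1)%N by lia.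
    have e2 : ((2 * j.+1) = (2 * j).+2)%N by lia.
    rewrite CS e1 e2; change (C j.+1.-1) with (C j); lia.
  apply; first by move=> x y _ _ /val_inj /perm_inj.
  move=> v; rewrite inE => /eqP hv /=.
  have hb : (blk v * M <= s v)%N by rewrite /blk leq_trunc_div.
  have hb2 : (s v < blk v * M + M)%N.
    by rewrite /blk {1}(divn_eq (s v) M) ltn_add2l ltn_pmod.
  have [_ hh] := Prange (blk v) (leq_ltn_trans hb (ltn_ord _)).
  rewrite hv in hh; lia.
have labset : forall i, (1 <= i <= k)%N -> forall v, ~~ (v \in S) ->
    ((f v == (2 * i).-1) ==> (v \in RS i :&: BS (Fi i))) &&
    ((f v == 2 * i) ==> (v \in RS i :\: BS (Fi i))).
  move=> i hi v; rewrite !inE => hv.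
  rewrite /f (body v (s v) hv (ltn_ord _) (near0 _)).
  rewrite /tau /st /O /blk.
  have [_ hP] := Prange2 _ (ltn_ord (s v)).
  set b := (s v %/ M)%N in hP *.
  case ho: (b < Fi (P b))%N; case hcv: (c v) => /=;
    apply/andP; split; apply/implyP => /eqP hf;
    first [exfalso; clear -hf hP hi; lia
          | (have hPi : P b = i by clear -hf hP hi; lia); by rewrite hPi eqxx /= -hPi ho].
have lab : forall i, (1 <= i <= k)%N ->
    (#|[set v | f v == (2 * i).-1]| <= #|S| + X i (Fi i))%N /\
    (#|[set v | f v == 2 * i]| + X i (Fi i) <= #|S| + #|RS i|)%N.
  move=> i hi; split.
    have sub : [set v | f v == (2 * i).-1] \subset S :|: (RS i :&: BS (Fi i)).
      apply/subsetP => v; rewrite inE => hv.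
      rewrite inE; case hS: (v \in S) => //=.
      by have /andP[/implyP H _] := labset i hi v (negbT hS); exact: H.
    apply: leq_trans (subset_leq_card sub) _; rewrite cardsU /X; lia.
  rewrite /X -(cardsID (BS (Fi i)) (RS i)).
  suff: (#|[set v | f v == 2 * i]| <= #|S| + #|RS i :\: BS (Fi i)|)%N by lia.
  have sub : [set v | f v == 2 * i] \subset S :|: (RS i :\: BS (Fi i)).
    apply/subsetP => v; rewrite inE => hv.
    rewrite inE; case hS: (v \in S) => //=.
    by have /andP[_ /implyP H] := labset i hi v (negbT hS); exact: H.
  apply: leq_trans (subset_leq_card sub) _; rewrite cardsU; lia.
exists S, f; split => //; split => //; split => //.
move=> i hi.
have [l1 l2] := lab i hi; have := Rcard i hi; have /andP[g1 g2] := Fi_good i.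
rewrite -/Nb -/D -/M; move: Scard; rewrite -/Nb.
move: l1 l2 g1 g2; clear; lia.
Qed.
Unset Implicit Arguments. Set Strict Implicit. Set Printing Implicit Defensive.
Import Order.TTheory GRing.Theory Num.Theory.
Local Open Scope ring_scope.

Theorem lemma8p1 (R : realType) (Delta k : nat) (xi : R) :
  0 < xi ->
  exists (lambda beta : R) (n0 : nat), 0 < lambda /\ 0 < beta /\
  forall (n : nat) (e : rel 'I_n) (n_ : nat -> nat) (i1 i2 : nat),
    (n0 <= n)%N ->
    simple_graph e -> bipartite e ->
    bandwidth_le e (beta * n%:R) -> max_deg_le e Delta ->
    (\sum_(1 <= i < (2 * k).+1) n_ i)%N = n ->
    (forall i, (1 <= i <= 2 * k)%N -> n%:R / (3 * k)%:R < (n_ i)%:R :> R) ->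
    (forall i, (1 <= i <= k)%N ->
       `| (n_ (2 * i).-1)%:R - (n_ (2 * i)%N)%:R | <= lambda * n%:R) ->
    (1 <= i1 <= k)%N -> (1 <= i2 <= k)%N -> i1 != i2 ->
    exists (S : {set 'I_n}) (f : 'I_n -> nat),
      hom_to_cycle_chord e k i1 i2 f /\
      (#|S|%:R <= xi * n%:R) /\
      (forall i, (1 <= i <= 2 * k)%N ->
         #|[set v | f v == i]|%:R <= (n_ i)%:R + xi * n%:R) /\
      (forall u v, e u v -> ~~ ((u \in S) && (v \in S)) ->
         exists i, (1 <= i <= k)%N /\
           ((f u = (2 * i).-1 /\ f v = 2 * i)%N \/
            (f u = 2 * i /\ f v = (2 * i).-1)%N)).
Proof.
move=> xi0.
set D := (12 * k + 3)%N.
set Kb := (Num.truncn (8 / xi)).+1.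
set E := (D.+1 * Kb)%N.
have E0 : (0 < E)%N by rewrite /E muln_gt0.
have E0r : 0 < E%:R :> R by rewrite ltr0n.
have hKb : 8 <= Kb%:R * xi.
  rewrite -ler_pdivrMr //; apply: ltW; exact: truncnS_gt.
exists (xi / 2), (xi / (100 * E%:R)), (Num.truncn (100 * E%:R / xi)).+1.
split; first lra.
split; first by apply: divr_gt0 => //; apply: mulr_gt0 => //; lra.
move=> n e n_ i1 i2 hn hsimp [c hc] [s hs] _ hsum _ hbal hi1 hi2 hi12.
set N := n%:R : R.
set beta := xi / (100 * E%:R).
set w := (Num.truncn (beta * N)).+1.
have hN : 100 * E%:R <= xi * N.
  have : 100 * E%:R / xi < N.
    apply: lt_le_trans (truncnS_gt _) _; rewrite /N ler_nat; exact: hn.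
  rewrite ltr_pdivrMr // => h; lra.
have hbN : beta * N = xi * N / (100 * E%:R) by rewrite /beta; field; lra.
have N0 : 0 <= N by rewrite /N ler0n.
have hw : w%:R <= beta * N + 1.
  rewrite /w -addn1 natrD lerD2r truncn_le; apply: mulr_ge0 => //.
  apply: divr_ge0; lra.
have hw2 : beta * N < w%:R by apply: truncnS_gt.
have hbw : forall u v, e u v -> (s u < s v + w)%N /\ (s v < s u + w)%N.
  move=> u v huv; have := hs u v huv; rewrite ler_norml => /andP[h1 h2].
  split; rewrite -(ltr_nat R) natrD; lra.
have [S [f [hom [hS [hlab hb3]]]]] :=
  @core n e c s w Kb k i1 i2 n_ (ltn0Sn _) (ltn0Sn _) hc hbw hsum hi1 hi2 hi12.
exists S, f; split => //.
set M := ((12 * k + 3).+1 * w * Kb)%N in hS hlab.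
set TB := ((n %/ M).+1 * ((12 * k + 3) * w))%N in hS hlab.
have hME : M = (E * w)%N by rewrite /M /E /D mulnAC.
have hKb0 : (0 < Kb)%N by [].
have a1 : (Kb * TB <= n + Kb * (D * w))%N.
  have t1 : (n %/ M * M <= n)%N := leq_trunc_div n M.
  have t2 : (D * w * Kb <= M)%N by rewrite /M leq_mul2r leq_mul2r leqnSn !orbT.
  have t3 : (n %/ M * (D * w * Kb) <= n %/ M * M)%N by rewrite leq_mul2l t2 orbT.
  rewrite /TB -/D mulSn; move: t1 t3; clear; nia.
have a2 : (D * w <= E * w)%N by rewrite leq_mul2r (leq_trans (leqnSn D) (leq_pmulr _ hKb0)) orbT.
have Ew : (E * w)%:R <= xi * N / 50 :> R.
  rewrite natrM.
  have : E%:R * w%:R <= E%:R * (beta * N + 1) :> R by rewrite ler_pM2l.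
  rewrite hbN.
  have -> : E%:R * (xi * N / (100 * E%:R) + 1) = xi * N / 100 + E%:R :> R.
    by field; lra.
  lra.
have TBr : TB%:R <= xi * N / 8 + xi * N / 50 :> R.
  have a1r : Kb%:R * TB%:R <= N + Kb%:R * (D * w)%:R :> R.
    by rewrite -!natrM -natrD ler_nat.
  have a2r : (D * w)%:R <= (E * w)%:R :> R by rewrite ler_nat.
  have Kbr : 0 < Kb%:R :> R by rewrite ltr0n.
  have : Kb%:R * TB%:R <= Kb%:R * (xi * N / 8 + xi * N / 50) :> R.
    apply: le_trans a1r _.
    have : 8 * N <= Kb%:R * xi * N by nra.
    nra.
  by rewrite ler_pM2l.
have Mr : M%:R <= xi * N / 50 :> R by rewrite hME.
clearbody TB M.
split.
  apply: le_trans (_ : TB%:R <= _); first by rewrite ler_nat.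
  have : 0 <= xi * N by apply: mulr_ge0 => //; lra.
  lra.
split; last exact: hb3.
move=> i hi.
have [j [hj hij]] : exists j, (1 <= j <= k)%N /\ (i = (2 * j).-1 \/ i = 2 * j)%N.
  exists (i.+1 %/ 2)%N; move: hi; clear; lia.
have [l1 l2] := hlab j hj.
have hb := hbal j hj; rewrite ler_norml in hb; move/andP: hb => [hb1 hb2].
have hxN : 0 <= xi * N by apply: mulr_ge0 => //; lra.
case: hij => ->.
  move: l1; rewrite -(ler_nat R) !natrD ?natrM => l1r.
  rewrite -/N in hb1 hb2; lra.
move: l2; rewrite -(ler_nat R) !natrD ?natrM => l2r.
rewrite -/N in hb1 hb2; lra.
Qed.
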